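(* None of seriality, reflexivity, Euclideanity and convergency is definable in $\mathcal{L}(\nabla,\bullet)$: for each of these properties $P$ there is no formula $\phi\in\mathcal{L}(\nabla,\bullet)$ such that for every frame $\mathcal{F}$, $\mathcal{F}\vDash\phi$ iff $\mathcal{F}$ has property $P$.
   Context: Fix a nonempty set $\mathbf{P}$ of propositional variables. $\mathcal{L}(\nabla,\bullet)$: $\phi::=p\mid\neg\phi\mid\phi\land\phi\mid\nabla\phi\mid\bullet\phi$. A frame is $\langle S,R\rangle$ with $S\neq\emptyset$, $R\subseteq S\times S$; a model based on it adds $V:\mathbf{P}\to\mathcal{P}(S)$. Truth: $\mathcal{M},s\vDash\nabla\phi$ iff there are $t,u$ with $sRt$, $sRu$, $\mathcal{M},t\vDash\phi$, $\mathcal{M},u\nvDash\phi$; $\mathcal{M},s\vDash\bullet\phi$ iff $\mathcal{M},s\vDash\phi$ and there is $t$ with $sRt$, $\mathcal{M},t\nvDash\phi$. $\mathcal{F}\vDash\phi$ means $\phi$ is true at every state of every model based on $\mathcal{F}$. Seriality: every state has an $R$-successor; reflexivity: $xRx$ for all $x$; Euclideanity: $xRy\land xRz\Rightarrow yRz$; convergency: $xRy\land xRz\Rightarrow\exists w(yRw\land zRw)$. *)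

(* Defs.v *)
From Stdlib Require Import Classical.

Inductive form (Var : Type) : Type :=
| FVar : Var -> form Var
| FNeg : form Var -> form Var
| FAnd : form Var -> form Var -> form Var
| FNabla : form Var -> form Var
| FBullet : form Var -> form Var.

Arguments FVar {Var} _.
Arguments FNeg {Var} _.
Arguments FAnd {Var} _ _.
Arguments FNabla {Var} _.
Arguments FBullet {Var} _.

Record frame : Type := Frame {
  state : Type;
  rel : state -> state -> Prop;
  state_inhabited : inhabited state
}.

Fixpoint sat {Var : Type} (F : frame) (V : Var -> state F -> Prop)
         (s : state F) (phi : form Var) : Prop :=
  match phi with
  | FVar p => V p s
  | FNeg a => ~ sat F V s a
  | FAnd a b => sat F V s a /\ sat F V s b
  | FNabla a => exists t u, rel F s t /\ rel F s u /\ sat F V t a /\ ~ sat F V u a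
  | FBullet a => sat F V s a /\ exists t, rel F s t /\ ~ sat F V t a
  end.

Definition frame_valid {Var : Type} (F : frame) (phi : form Var) : Prop :=
  forall (V : Var -> state F -> Prop) (s : state F), sat F V s phi.

Definition serial (F : frame) : Prop :=
  forall x, exists y, rel F x y.
Definition reflexive (F : frame) : Prop :=
  forall x, rel F x x.
Definition euclidean (F : frame) : Prop :=
  forall x y z, rel F x y -> rel F x z -> rel F y z.
Definition convergent (F : frame) : Prop :=
  forall x y z, rel F x y -> rel F x z -> exists w, rel F y w /\ rel F z w.

Definition definable {Var : Type} (P : frame -> Prop) : Prop :=
  exists phi : form Var, forall F : frame, frame_valid F phi <-> P F.

(* Main.v *)
Require Import Defs.

Section Transfer.
Variables (T : Type) (i : inhabited T) (R1 R2 : T -> T -> Prop).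
Hypothesis H : forall s,
  (forall t, R1 s t <-> R2 s t) \/
  ((forall t, R1 s t <-> t = s) /\ (forall t, ~ R2 s t)) \/
  ((forall t, R2 s t <-> t = s) /\ (forall t, ~ R1 s t)).

Lemma transfer {Var : Type} (V : Var -> T -> Prop) (phi : form Var) :
  forall s, sat (Frame T R1 i) V s phi <-> sat (Frame T R2 i) V s phi.
Proof.
  induction phi as [p|a IH|a IHa b IHb|a IH|a IH]; intro s; simpl.
  - tauto.
  - rewrite IH; tauto.
  - rewrite IHa, IHb; tauto.
  - destruct (H s) as [E|[[E1 E2]|[E1 E2]]].
    + split; intros (t & u & h1 & h2 & h3 & h4); exists t, u;
        rewrite <- ?E, ?E, <- ?IH, ?IH in *; auto.
    + split.
      * intros (t & u & h1 & h2 & h3 & h4).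
        apply E1 in h1; apply E1 in h2; subst; contradiction.
      * intros (t & u & h1 & _). exfalso; exact (E2 _ h1).
    + split.
      * intros (t & u & h1 & _). exfalso; exact (E2 _ h1).
      * intros (t & u & h1 & h2 & h3 & h4).
        apply E1 in h1; apply E1 in h2; subst; contradiction.
  - destruct (H s) as [E|[[E1 E2]|[E1 E2]]].
    + split; intros [h0 (t & h1 & h2)]; split; try (apply IH; auto);
        try (apply IH; auto; fail); exists t;
        rewrite <- ?E, ?E, <- ?IH, ?IH in *; auto.
    + split.
      * intros [h0 (t & h1 & h2)]. apply E1 in h1; subst; contradiction.
      * intros [_ (t & h1 & _)]. exfalso; exact (E2 _ h1).
    + split.
      * intros [_ (t & h1 & _)]. exfalso; exact (E2 _ h1).
      * intros [h0 (t & h1 & h2)]. apply E1 in h1; subst; contradiction.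
Qed.

Lemma transfer_valid {Var : Type} (phi : form Var) :
  frame_valid (Frame T R1 i) phi -> frame_valid (Frame T R2 i) phi.
Proof. intros Hv V s. apply transfer, Hv. Qed.
End Transfer.

Definition U1 : frame := Frame unit (fun _ _ => True) (inhabits tt).
Definition U2 : frame := Frame unit (fun _ _ => False) (inhabits tt).
Definition B1 : frame := Frame bool (fun _ b => b = true) (inhabits true).
Definition B2 : frame := Frame bool (fun a b => a = false /\ b = true) (inhabits true).

Lemma U_valid {Var : Type} (phi : form Var) : frame_valid U1 phi -> frame_valid U2 phi.
Proof.
  apply transfer_valid. intros []. right; left; split.
  - intros []; tauto.
  - simpl; tauto.
Qed.

Lemma B_valid {Var : Type} (phi : form Var) : frame_valid B1 phi -> frame_valid B2 phi.
Proof.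
  apply transfer_valid. intros [|].
  - right; left; split.
    + intros t; tauto.
    + intros t [h _]; discriminate.
  - left; intros t; split; [intros h; split; auto | intros [_ h]; auto].
Qed.

Theorem corollary1 (Var : Type) (p0 : Var) :
  ~ definable (Var:=Var) serial /\
  ~ definable (Var:=Var) reflexive /\
  ~ definable (Var:=Var) euclidean /\
  ~ definable (Var:=Var) convergent.
Proof.
  repeat split; intros [phi Hphi].
  - assert (h : serial U2).
    { apply Hphi, U_valid, Hphi. intros x; exists x; exact I. }
    destruct (h tt) as [_ []].
  - assert (h : reflexive U2).
    { apply Hphi, U_valid, Hphi. intros x; exact I. }
    exact (h tt).
  - assert (h : euclidean B2).
    { apply Hphi, B_valid, Hphi. intros x y z _ hz; exact hz. }
    destruct (h false true true (conj eq_refl eq_refl) (conj eq_refl eq_refl)) as [h' _].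
    discriminate.
  - assert (h : convergent B2).
    { apply Hphi, B_valid, Hphi. intros x y z hy hz; exists true; simpl; auto. }
    destruct (h false true true (conj eq_refl eq_refl) (conj eq_refl eq_refl)) as [w [[h' _] _]].
    discriminate.
Qed.
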